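(* The Hopf algebras $\mathsf{cf}(\mathrm{UT}_\bullet)$ and $\mathsf{scf}(\mathrm{UT}_\bullet)$ are noncommutative and noncocommutative.
   Context: Fix the finite field $\mathbb{F}_q$; $[n]=\{1,\dots,n\}$. $\mathrm{UT}_n$ is the group of $n\times n$ unipotent upper triangular matrices over $\mathbb{F}_q$; $\mathsf{cf}$ denotes complex class functions. Hopf algebra $\mathsf{cf}(\mathrm{UT}_\bullet)=\bigoplus_n\mathsf{cf}(\mathrm{UT}_n)$: for $I\subseteq[n]$, $I^c=[n]\setminus I$, let $\mathrm{UL}_I=\{g\in\mathrm{UT}_n:(g-1_n)_{i,j}\ne0\text{ only if }(i,j)\in I\times I\cup I^c\times I^c\}$, $\mathrm{UR}_I=\{g:(g-1_n)_{i,j}\ne0\text{ only if }(i,j)\in I\times I^c\}$, $\mathrm{UP}_I=\{g:(g-1_n)_{i,j}=0\text{ for }(i,j)\in I^c\times I\}=\mathrm{UL}_I\ltimes\mathrm{UR}_I$ ($\mathrm{UP}_{[i]}=\mathrm{UT}_n$). With $\mathrm{cano}_I:I\to[|I|]$ order-preserving, $\mathrm{UL}_I\cong\mathrm{UT}_{|I|}\times\mathrm{UT}_{|I^c|}$ by relabelling the diagonal blocks, inducing $\mathrm{st}_{(I,I^c)}:\mathsf{cf}(\mathrm{UL}_I)\to\mathsf{cf}(\mathrm{UT}_{|I|})\otimes\mathsf{cf}(\mathrm{UT}_{|I^c|})$. Product $\mu=\bigoplus_{n\ge i\ge0}\mathrm{Inf}^{\mathrm{UT}_n}_{\mathrm{UL}_{[i]}}\circ\mathrm{st}^{-1}_{([i],[i]^c)}$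 with $\mathrm{Inf}\psi(lr)=\psi(l)$; coproduct $\Delta=\bigoplus_n\sum_{I\subseteq[n]}\mathrm{st}_{(I,I^c)}\circ\mathrm{Def}^{\mathrm{UP}_I}_{\mathrm{UL}_I}\circ\mathrm{Res}^{\mathrm{UT}_n}_{\mathrm{UP}_I}$ with $\mathrm{Def}\psi(g)=\frac1{|\mathrm{UR}_I|}\sum_{x\in\mathrm{UR}_I}\psi(gx)$. A natural unit interval order of $[n]$ is a partial order $\pi\subseteq[n]\times[n]$ with $(i,j)\in\pi\Rightarrow i\le j$ such that for every $(j,k)\in\pi$ with $j\ne k$, all $(i,l)$ with $i\le j$, $k\le l$ lie in $\pi$. For such $\pi$, $\mathrm{UT}(\pi)=\{g\in\mathrm{UT}_n:(g-1_n)_{i,j}\ne0\text{ only if }(i,j)\in\pi\}$, and $\mathsf{scf}(\mathrm{UT}_n)$ is the span of the characters $\mathrm{Ind}^{\mathrm{UT}_n}_{\mathrm{UT}(\pi)}(\mathbb{1})$ over all natural unit interval orders $\pi$ of $[n]$; $\mathsf{scf}(\mathrm{UT}_\bullet)=\bigoplus_n\mathsf{scf}(\mathrm{UT}_n)$ is a sub-Hopf algebra of $\mathsf{cf}(\mathrm{UT}_\bullet)$. *)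

(* Defs.v *)
From mathcomp Require Import all_boot all_order all_algebra all_field.
Set Implicit Arguments. Unset Strict Implicit. Unset Printing Implicit Defensive.
Import GRing.Theory.

(* A class function on UT_n is modelled as a function 'M[F]_n -> algC that
   vanishes outside UT_n and is invariant under UT_n-conjugation. *)

Section Defs.
Variable F : finFieldType.
Local Open Scope ring_scope.

Definition UT (n : nat) : {set 'M[F]_n} :=
  [set A : 'M[F]_n | [forall i : 'I_n, forall j : 'I_n,
     ((j < i)%N ==> (A i j == 0)) && ((i == j) ==> (A i j == 1))]].

Definition is_cf (n : nat) (f : 'M[F]_n -> algC) : Prop :=
  (forall A, A \notin UT n -> f A = 0) /\
  (forall g h, g \in UT n -> h \in UT n -> f (invmx g *m h *m g) = f h).

(* entry (i,j) of a matrix, addressed by natural numbers (0 if out of range) *)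
Definition mxn (m : nat) (A : 'M[F]_m) (i j : nat) : F :=
  match (insub i : option 'I_m), (insub j : option 'I_m) with
  | Some i', Some j' => A i' j'
  | _, _ => 0
  end.

(* product component cf(UT_a) (x) cf(UT_b) -> cf(UT_n), n = a + b:
   Inf^{UT_n}_{UL_[a]} o st^{-1}, i.e. f(top-left a-block) * g(bottom-right b-block) *)
Definition mu (n a b : nat) (f : 'M[F]_a -> algC) (g : 'M[F]_b -> algC)
    (A : 'M[F]_n) : algC :=
  if A \in UT n then
    f (\matrix_(i < a, j < a) mxn A i j) *
    g (\matrix_(i < b, j < b) mxn A (a + i) (a + j))
  else 0.

(* cano_I(i) : position of i inside I (0-based) *)
Definition rk (n : nat) (I : {set 'I_n}) (i : 'I_n) : nat :=
  #|[set k in I | (k < i)%N]|.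

(* the element of UL_I corresponding under st to (u, v) *)
Definition embL (n a b : nat) (I : {set 'I_n}) (u : 'M[F]_a) (v : 'M[F]_b)
    : 'M[F]_n :=
  \matrix_(i, j)
    if (i \in I) && (j \in I) then mxn u (rk I i) (rk I j)
    else if (i \notin I) && (j \notin I) then mxn v (rk (~: I) i) (rk (~: I) j)
    else 0.

Definition UR (n : nat) (I : {set 'I_n}) : {set 'M[F]_n} :=
  [set x in UT n | [forall i : 'I_n, forall j : 'I_n,
     ((x - 1%:M) i j != 0) ==> ((i \in I) && (j \notin I))]].

(* the (a,b)-component (a + b = n) of the coproduct, as a function on
   UT_a x UT_b (identifying cf(UT_a) (x) cf(UT_b) with cf(UT_a x UT_b)):
   sum_{|I| = a} st_(I,I^c) o Def^{UP_I}_{UL_I} o Res^{UT_n}_{UP_I} *)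
Definition Delta (n a b : nat) (chi : 'M[F]_n -> algC)
    (u : 'M[F]_a) (v : 'M[F]_b) : algC :=
  \sum_(I : {set 'I_n} | #|I| == a)
     (#|UR I|%:R)^-1 * \sum_(x in UR I) chi (embL I u v *m x).

Definition nuio (n : nat) (P : {set 'I_n * 'I_n}) : bool :=
  [&& [forall i : 'I_n, (i, i) \in P],
      [forall i : 'I_n, forall j : 'I_n, ((i, j) \in P) && ((j, i) \in P) ==> (i == j)],
      [forall i : 'I_n, forall j : 'I_n, forall k : 'I_n,
         ((i, j) \in P) && ((j, k) \in P) ==> ((i, k) \in P)],
      [forall i : 'I_n, forall j : 'I_n, ((i, j) \in P) ==> (i <= j)%N] &
      [forall j : 'I_n, forall k : 'I_n, ((j, k) \in P) && (j != k) ==>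
         [forall i : 'I_n, forall l : 'I_n, (i <= j)%N && (k <= l)%N ==> ((i, l) \in P)]]].

Definition UTpi (n : nat) (P : {set 'I_n * 'I_n}) : {set 'M[F]_n} :=
  [set A in UT n | [forall i : 'I_n, forall j : 'I_n, ((A - 1%:M) i j != 0) ==> ((i, j) \in P)]].

Definition IndOne (n : nat) (H : {set 'M[F]_n}) (g : 'M[F]_n) : algC :=
  if g \in UT n then
    (#|H|%:R)^-1 * \sum_(x in UT n) ((invmx x *m g *m x) \in H)%:R
  else 0.

Definition is_scf (n : nat) (f : 'M[F]_n -> algC) : Prop :=
  exists c : {set 'I_n * 'I_n} -> algC,
    forall A, f A = \sum_(P : {set 'I_n * 'I_n} | nuio P) c P * IndOne (UTpi P) A.

End Defs.

(* Main.v *)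
Require Import Defs.
From mathcomp Require Import all_boot all_order all_algebra all_field.
Set Implicit Arguments. Unset Strict Implicit. Unset Printing Implicit Defensive.
Import Order.TTheory GRing.Theory Num.Theory.
Local Open Scope ring_scope.

Lemma UTP (F : finFieldType) n (A : 'M[F]_n) :
  (A \in UT F n) = [forall i : 'I_n, forall j : 'I_n, ((j < i)%N ==> (A i j == 0)) && ((i == j) ==> (A i j == 1))].
Proof. by rewrite inE. Qed.

Lemma UT_low (F : finFieldType) n (A : 'M[F]_n) (i j : 'I_n) : A \in UT F n -> (j < i)%N -> A i j = 0.
Proof. by rewrite UTP => /forallP/(_ i)/forallP/(_ j)/andP[/implyP H _] /H/eqP. Qed.

Lemma UT_diag (F : finFieldType) n (A : 'M[F]_n) (i : 'I_n) : A \in UT F n -> A i i = 1.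
Proof. by rewrite UTP => /forallP/(_ i)/forallP/(_ i)/andP[_ /implyP H]; apply/eqP/H. Qed.

Lemma UT_intro (F : finFieldType) n (A : 'M[F]_n) :
  (forall i j : 'I_n, (j < i)%N -> A i j = 0) -> (forall i : 'I_n, A i i = 1) -> A \in UT F n.
Proof.
move=> H1 H2; rewrite UTP; apply/forallP=> i; apply/forallP=> j.
apply/andP; split; apply/implyP => h; first by rewrite H1.
by rewrite -(eqP h) H2.
Qed.

Lemma UT1 (F : finFieldType) n : (1%:M : 'M[F]_n) \in UT F n.
Proof.
apply: UT_intro => [i j h|i]; last by rewrite mxE eqxx.
by rewrite mxE; case: eqP => // e; move: h; rewrite e ltnn.
Qed.

Lemma UT_mul (F : finFieldType) n (A B : 'M[F]_n) :
  A \in UT F n -> B \in UT F n -> A *m B \in UT F n.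
Proof.
move=> HA HB; apply: UT_intro => [i j h|i]; rewrite mxE.
  apply: big1 => k _; case: (ltnP k i) => hk; first by rewrite (UT_low HA hk) mul0r.
  by rewrite (UT_low HB (leq_trans h hk)) mulr0.
rewrite (bigD1 i) //= big1 ?addr0 ?UT_diag ?mulr1 // => k hk.
case: (ltngtP k i) => hk'; first by rewrite (UT_low HA hk') mul0r.
  by rewrite (UT_low HB hk') mulr0.
by move: hk; rewrite (val_inj hk') eqxx.
Qed.

Lemma UT_unit (F : finFieldType) n (A : 'M[F]_n) : A \in UT F n -> A \in unitmx.
Proof.
move=> HA; rewrite -unitmx_tr unitmxE det_trig.
  by rewrite big1 ?unitr1 // => i _; rewrite mxE UT_diag.
by apply/is_trig_mxP => i j h; rewrite mxE (UT_low HA h).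
Qed.

Lemma UT_inv (F : finFieldType) n (A : 'M[F]_n) : A \in UT F n -> invmx A \in UT F n.
Proof.
move=> HA.
have inj : {in UT F n &, injective (fun B => B *m A)}.
  by move=> B C _ _ /(congr1 (mulmx^~ (invmx A))); rewrite !mulmxK ?UT_unit.
have sub : (fun B => B *m A) @: UT F n \subset UT F n.
  by apply/subsetP => _ /imsetP[B HB ->]; apply: UT_mul.
have : (fun B => B *m A) @: UT F n == UT F n by rewrite eqEcard sub (card_in_imset inj) leqnn.
move/eqP => E; have := UT1 F n; rewrite -E => /imsetP[B HB EB].
have -> : invmx A = B by rewrite -[invmx A]mul1mx EB mulmxK ?UT_unit.
by rewrite E.
Qed.

Definition Pset n (r : 'I_n -> 'I_n -> bool) : {set 'I_n * 'I_n} :=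
  [set p | (p.1 == p.2) || r p.1 p.2].

Definition ideal n (r : 'I_n -> 'I_n -> bool) :=
  (forall i j i' j' : 'I_n, r i j -> (i' <= i)%N -> (j <= j')%N -> r i' j') /\
  (forall i j, r i j -> (i < j)%N).

Definition supp (F : finFieldType) n (r : 'I_n -> 'I_n -> bool) (X : 'M[F]_n) :=
  forall i j, X i j != 0 -> r i j.

Lemma UTpiP (F : finFieldType) n r (A : 'M[F]_n) :
  (A \in UTpi F (Pset r)) = (A \in UT F n) && [forall i, forall j, ((A - 1%:M) i j != 0) ==> r i j].
Proof.
rewrite inE; case HA: (A \in UT F n) => //=.
apply/forallP/forallP => H i; apply/forallP => j; apply/implyP => Hij;
  move/forallP: (H i) => /(_ j)/implyP/(_ Hij); rewrite ?inE //=.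
  case: eqP => [e|_] //= _; move: Hij; rewrite e !mxE eqxx UT_diag // subrr eqxx //.
by move=> ->; rewrite orbT.
Qed.

Lemma UTpi_supp (F : finFieldType) n r (A : 'M[F]_n) :
  (A \in UTpi F (Pset r)) <-> (A \in UT F n) /\ supp r (A - 1%:M).
Proof.
rewrite UTpiP; split => [/andP[H1 /forallP H2]|[H1 H2]]; first split => // i j.
  by move/forallP: (H2 i) => /(_ j)/implyP.
by rewrite H1; apply/forallP => i; apply/forallP => j; apply/implyP/H2.
Qed.

Lemma supp_mull (F : finFieldType) n r (A X : 'M[F]_n) : ideal r ->
  (forall i j : 'I_n, (j < i)%N -> A i j = 0) -> supp r X -> supp r (A *m X).
Proof.
move=> [Hr _] HA HX i j; apply: contraR => nr; rewrite mxE; apply/eqP.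
apply: big1 => k _; case: (ltnP k i) => hk; first by rewrite HA // mul0r.
case: (eqVneq (X k j) 0) => [->|/HX hX]; first by rewrite mulr0.
by case/negP: nr; apply: (Hr _ _ _ _ hX).
Qed.

Lemma supp_mulr (F : finFieldType) n r (A X : 'M[F]_n) : ideal r ->
  (forall i j : 'I_n, (j < i)%N -> A i j = 0) -> supp r X -> supp r (X *m A).
Proof.
move=> [Hr _] HA HX i j; apply: contraR => nr; rewrite mxE; apply/eqP.
apply: big1 => k _; case: (ltnP j k) => hk; first by rewrite HA // mulr0.
case: (eqVneq (X i k) 0) => [->|/HX hX]; first by rewrite mul0r.
by case/negP: nr; apply: (Hr _ _ _ _ hX).
Qed.

Lemma UT_conj_mem (F : finFieldType) n r (x g : 'M[F]_n) : ideal r ->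
  x \in UT F n -> g \in UT F n ->
  (invmx x *m g *m x \in UTpi F (Pset r)) = (g \in UTpi F (Pset r)).
Proof.
move=> Hi Hx Hg; have Ux := UT_unit Hx; have Hx' := UT_inv Hx.
have Hy : invmx x *m g *m x \in UT F n by rewrite UT_mul // UT_mul.
apply/idP/idP => /UTpi_supp [_ S]; apply/UTpi_supp; split => //.
  have -> : g - 1%:M = x *m (invmx x *m g *m x - 1%:M) *m invmx x.
    by rewrite mulmxBr mulmxBl mulmx1 mulmxV // !mulmxA mulmxV // mul1mx mulmxK.
  apply: supp_mulr => //; first by move=> i j; apply: UT_low.
  by apply: supp_mull => //; move=> i j; apply: UT_low.
have -> : invmx x *m g *m x - 1%:M = invmx x *m (g - 1%:M) *m x.
  by rewrite mulmxBr mulmxBl mulmx1 mulVmx.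
apply: supp_mulr => //; first by move=> i j; apply: UT_low.
by apply: supp_mull => //; move=> i j; apply: UT_low.
Qed.

Lemma nuio_Pset n (r : 'I_n -> 'I_n -> bool) : ideal r -> nuio (Pset r).
Proof.
move=> [Hr Hlt]; apply/and5P; split.
- by apply/forallP => i; rewrite inE eqxx.
- apply/forallP => i; apply/forallP => j; apply/implyP; rewrite !inE /=.
  case/andP => /orP[// | rij] /orP[/eqP -> // | rji].
  by have := ltn_trans (Hlt _ _ rij) (Hlt _ _ rji); rewrite ltnn.
- apply/forallP => i; apply/forallP => j; apply/forallP => k; apply/implyP; rewrite !inE /=.
  case/andP => /orP[/eqP -> // | rij] /orP[/eqP <- | rjk]; first by rewrite rij orbT.
  by rewrite (Hr _ _ i k rij) ?orbT // ltnW // Hlt.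
- apply/forallP => i; apply/forallP => j; apply/implyP; rewrite !inE /=.
  by case/orP => [/eqP -> // | /Hlt /ltnW].
- apply/forallP => j; apply/forallP => k; apply/implyP; rewrite !inE /=.
  case/andP => /orP[/eqP -> | rjk]; first by rewrite eqxx.
  move=> _; apply/forallP => i; apply/forallP => l; apply/implyP => /andP[hi hl].
  by rewrite inE /= (Hr _ _ _ _ rjk hi hl) orbT.
Qed.

Definition chiH (F : finFieldType) n (r : 'I_n -> 'I_n -> bool) (A : 'M[F]_n) : algC :=
  (A \in UTpi F (Pset r))%:R.

Lemma one_UTpi (F : finFieldType) n r : (1%:M : 'M[F]_n) \in UTpi F (Pset r).
Proof. by apply/UTpi_supp; split; [apply: UT1 | move=> i j; rewrite subrr mxE eqxx]. Qed.

Lemma UTpi_UT (F : finFieldType) n r (A : 'M[F]_n) : A \in UTpi F (Pset r) -> A \in UT F n.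
Proof. by case/UTpi_supp. Qed.

Lemma IndOne_Pset (F : finFieldType) n r (g : 'M[F]_n) : ideal r ->
  IndOne (UTpi F (Pset r)) g =
    (#|UT F n|%:R / #|UTpi F (Pset r)|%:R) * chiH r g.
Proof.
move=> Hi; rewrite /IndOne /chiH; case: ifP => Hg.
  rewrite (eq_bigr (fun _ => (g \in UTpi F (Pset r))%:R)); last first.
    by move=> x Hx; rewrite UT_conj_mem.
  by rewrite sumr_const -[_ *+ #|UT F n|]mulr_natl mulrA [_^-1 * _]mulrC.
case: (boolP (g \in UTpi F (Pset r))) => [/UTpi_UT|]; first by rewrite Hg.
by rewrite mulr0.
Qed.

Lemma card_UTpi_neq0 (F : finFieldType) n (r : 'I_n -> 'I_n -> bool) : #|UTpi F (Pset r)|%:R != 0 :> algC.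
Proof.
rewrite pnatr_eq0 -lt0n; apply/card_gt0P; exists (1%:M : 'M[F]_n); apply: one_UTpi.
Qed.

Lemma card_UT_neq0 (F : finFieldType) n : #|UT F n|%:R != 0 :> algC.
Proof.
rewrite pnatr_eq0 -lt0n; apply/card_gt0P; exists (1%:M : 'M[F]_n); apply: UT1.
Qed.

Lemma scf_chiH (F : finFieldType) n r : ideal r -> is_scf (fun A : 'M[F]_n => chiH r A).
Proof.
move=> Hi.
exists (fun P => (P == Pset r)%:R * (#|UTpi F (Pset r)|%:R / #|UT F n|%:R)) => A.
rewrite (bigD1 (Pset r)) ?nuio_Pset //= big1 => [|P /andP[_ hP]]; last first.
  by rewrite (negbTE hP) !mul0r.
rewrite eqxx mul1r addr0 IndOne_Pset // mulrA.
have H1 := card_UTpi_neq0 F r; have H2 := card_UT_neq0 F n.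
by rewrite [X in _ = X * _](_ : _ = 1) ?mul1r // mulrA divfK // divff.
Qed.

Lemma cf_chiH (F : finFieldType) n r : ideal r -> is_cf (fun A : 'M[F]_n => chiH r A).
Proof.
move=> Hi; split => [A HA|g h Hg Hh]; rewrite /chiH.
  case: (boolP (A \in UTpi F (Pset r))) => // /UTpi_UT HA'.
  by rewrite HA' in HA.
by rewrite UT_conj_mem.
Qed.

Lemma scf_sub (F : finFieldType) n (f g : 'M[F]_n -> algC) :
  is_scf f -> is_scf g -> is_scf (fun A => f A - g A).
Proof.
move=> [c Hc] [d Hd]; exists (fun P => c P - d P) => A.
by rewrite Hc Hd -sumrB; apply: eq_bigr => P _; rewrite mulrBl.
Qed.

Lemma cf_sub (F : finFieldType) n (f g : 'M[F]_n -> algC) :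
  is_cf f -> is_cf g -> is_cf (fun A => f A - g A).
Proof.
move=> [f1 f2] [g1 g2]; split => [A HA|x h Hx Hh]; first by rewrite f1 ?g1 ?subrr.
by rewrite f2 ?g2.
Qed.

Definition mk (F : finFieldType) m (f : nat -> nat -> F) : 'M[F]_m := \matrix_(i, j) f i j.

Lemma mxn_mk (F : finFieldType) m (f : nat -> nat -> F) a b :
  mxn (mk m f) a b = if (a < m)%N && (b < m)%N then f a b else 0.
Proof.
rewrite /mxn; case: insubP => [i Ha Hi|/negbTE ->]; last by [].
case: insubP => [j Hb Hj|/negbTE ->]; last by rewrite andbF.
by rewrite Ha Hb mxE Hi Hj.
Qed.

Lemma mk_entry (F : finFieldType) m (f : nat -> nat -> F) (i j : 'I_m) : mk m f i j = f i j.
Proof. by rewrite mxE. Qed.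

Lemma rkE n (I : {set 'I_n}) (p : 'I_n) : rk I p = (\sum_(k < n) ((k \in I) && (k < p)))%N.
Proof.
rewrite /rk -sum1_card big_mkcond /=; apply: eq_bigr => k _.
by rewrite inE; case: (_ && _).
Qed.

Lemma embLE (F : finFieldType) n a b (I : {set 'I_n}) (u : 'M[F]_a) (v : 'M[F]_b) p q :
  embL I u v p q =
    if (p \in I) && (q \in I) then mxn u (rk I p) (rk I q)
    else if (p \notin I) && (q \notin I) then mxn v (rk (~: I) p) (rk (~: I) q)
    else 0.
Proof. by rewrite mxE. Qed.

Lemma URP (F : finFieldType) n (I : {set 'I_n}) (x : 'M[F]_n) :
  x \in UR F I -> x \in UT F n /\ forall i j, (x - 1%:M) i j != 0 -> (i \in I) && (j \notin I).
Proof.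
rewrite inE => /andP[H1 /forallP H2]; split => // i j.
by move/forallP: (H2 i) => /(_ j)/implyP.
Qed.

Lemma embL_mul_fix (F : finFieldType) n a b (I : {set 'I_n}) (u : 'M[F]_a) (v : 'M[F]_b) x p q :
  x \in UR F I -> (p \notin I) || (q \in I) ->
  (embL I u v *m x) p q = embL I u v p q.
Proof.
move=> /URP[_ Hx] Hpq.
have -> : x = 1%:M + (x - 1%:M) by rewrite addrC subrK.
rewrite mulmxDr mulmx1 mxE [X in _ + X](_ : _ = 0) ?addr0 //.
rewrite mxE; apply: big1 => k _.
case: (eqVneq ((x - 1%:M) k q) 0) => [->|/Hx /andP[hk hq]]; first by rewrite mulr0.
move: Hpq; rewrite (negbTE hq) orbF => hp.
by rewrite embLE hk (negbTE hp) /= mul0r.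
Qed.

Definition o4 (k : nat) (h : (k < 4)%N) : 'I_4 := Ordinal h.


Definition r0 n : 'I_n -> 'I_n -> bool := fun _ _ => false.
Lemma ideal_r0 n : ideal (@r0 n).
Proof. by split. Qed.

Lemma notin_UTpi (F : finFieldType) n (r : 'I_n -> 'I_n -> bool) (y : 'M[F]_n) p q :
  (y - 1%:M) p q != 0 -> ~~ r p q -> y \notin UTpi F (Pset r).
Proof. by move=> H1 H2; apply/negP => /UTpi_supp [_ /(_ p q H1)]; apply/negP. Qed.

Definition A3 (F : finFieldType) : 'M[F]_3 :=
  mk 3 (fun i j => if i == j then 1 else if (i == 0%N) && (j == 1%N) then 1 else 0).

Lemma prod_ex (F : finFieldType) :
  mu (fun A : 'M[F]_1 => chiH (@r0 1) A) (fun A : 'M[F]_2 => chiH (@r0 2) A) (A3 F) <>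
  mu (fun A : 'M[F]_2 => chiH (@r0 2) A) (fun A : 'M[F]_1 => chiH (@r0 1) A) (A3 F).
Proof.
have HA : A3 F \in UT F 3.
  apply: UT_intro => [i j h|i]; rewrite mk_entry; last by rewrite eqxx.
  rewrite (gtn_eqF h); case: eqP => [e|] //; move: h; rewrite e; case: (j : nat) => [|[|]] //.
rewrite /mu HA.
set M1 := \matrix_(i < 1, j < 1) _.
set M2 := \matrix_(i < 2, j < 2) _.
set M3 := \matrix_(i < 2, j < 2) _.
set M4 := \matrix_(i < 1, j < 1) _.
have -> : M1 = 1%:M.
  apply/matrixP => i j; rewrite !mxE mxn_mk !ord1 /=; by [].
have -> : M2 = 1%:M.
  apply/matrixP => i j; rewrite !mxE mxn_mk.
  have hi : (1 + i < 3)%N by rewrite add1n; exact: (ltn_ord i).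
  have hj : (1 + j < 3)%N by rewrite add1n; exact: (ltn_ord j).
  rewrite hi hj /= eqn_add2l.
  by case: (i =P j) => [->|ne]; rewrite ?eqxx //; case: eqP => // /val_inj.
have : M3 \notin UTpi F (Pset (@r0 2)).
  apply: (@notin_UTpi _ _ _ _ ord0 (@Ordinal 2 1 isT)) => //.
  by rewrite !mxE mxn_mk /= subr0 oner_neq0.
rewrite /chiH (one_UTpi F (@r0 1)) (one_UTpi F (@r0 2)) => /negbTE ->.
by rewrite mul0r mulr1; apply/eqP; rewrite oner_neq0.
Qed.

Definition r1 (i j : 'I_4) : bool := ((j == 3 :> nat) && (i <= 1)%N) || ((i == 0 :> nat) && (j == 2 :> nat)).
Definition r2 (i j : 'I_4) : bool := (j == 3 :> nat) && (i <= 1)%N.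

Lemma ideal_r1 : ideal r1.
Proof.
split.
  by do 4 case=> [[|[|[|[|?]]]] ?] //.
by do 2 case=> [[|[|[|[|?]]]] ?] //.
Qed.

Lemma ideal_r2 : ideal r2.
Proof.
split.
  by do 4 case=> [[|[|[|[|?]]]] ?] //.
by do 2 case=> [[|[|[|[|?]]]] ?] //.
Qed.

Definition u1 (F : finFieldType) : 'M[F]_1 := 1%:M.
Definition v3 (F : finFieldType) : 'M[F]_3 :=
  mk 3 (fun i j => if i == j then 1 else if (i == 1%N) && (j == 2%N) then 1 else 0).
Definition chi4 (F : finFieldType) (A : 'M[F]_4) : algC := chiH r1 A - chiH r2 A.

Lemma chi4_zero_entry (F : finFieldType) (y : 'M[F]_4) p q :
  (y - 1%:M) p q != 0 -> ~~ r1 p q -> chi4 y = 0.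
Proof.
move=> H1 H2; have H3 : ~~ r2 p q by move: H2; rewrite /r1 /r2; case: (_ && _).
by rewrite /chi4 /chiH (negbTE (notin_UTpi H1 H2)) (negbTE (notin_UTpi H1 H3)) subrr.
Qed.

Lemma chi4_eq (F : finFieldType) (y : 'M[F]_4) :
  (y - 1%:M) (@Ordinal 4 0 isT) (@Ordinal 4 2 isT) = 0 -> chi4 y = 0.
Proof.
move=> H0; rewrite /chi4 /chiH.
suff -> : (y \in UTpi F (Pset r1)) = (y \in UTpi F (Pset r2)) by rewrite subrr.
apply/idP/idP => /UTpi_supp [Hy S]; apply/UTpi_supp; split => // i j hij; last first.
  by move: (S i j hij); rewrite /r1 /r2 => ->.
move: (S i j hij); rewrite /r1 /r2; case/orP => // /andP[hi hj].
have ei : i = @Ordinal 4 0 isT by apply/val_inj; apply/eqP.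
have ej : j = @Ordinal 4 2 isT by apply/val_inj; apply/eqP.
by move: hij; rewrite ei ej H0 eqxx.
Qed.

Ltac comp := rewrite !mxE !inE /= ?rkE ?big_ord_recr ?big_ord0 /= ?inE /= ?mxn_mk /= ?subr0 ?oner_neq0.

Lemma Delta_zero (F : finFieldType) : Delta (@chi4 F) (u1 F) (v3 F) = 0.
Proof.
rewrite /Delta; apply: big1 => I /cards1P [i ->].
rewrite [X in _ * X]big1 ?mulr0 // => x Hx.
move: Hx; case: i => [[|[|[|[|i]]]] Hi] Hx.
- apply: (@chi4_zero_entry _ _ (@Ordinal 4 2 isT) (@Ordinal 4 3 isT)) => //.
  rewrite mxE embL_mul_fix //; last by rewrite !inE.
  by comp.
- apply: (@chi4_zero_entry _ _ (@Ordinal 4 2 isT) (@Ordinal 4 3 isT)) => //.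
  rewrite mxE embL_mul_fix //; last by rewrite !inE.
  by comp.
- apply: chi4_eq.
  rewrite mxE embL_mul_fix //; last by rewrite !inE.
  by comp.
- apply: (@chi4_zero_entry _ _ (@Ordinal 4 1 isT) (@Ordinal 4 2 isT)) => //.
  rewrite mxE embL_mul_fix //; last by rewrite !inE.
  by comp.
- by [].
Qed.

Definition I0 : {set 'I_4} := [set~ (@Ordinal 4 2 isT)].
Definition x0 (F : finFieldType) : 'M[F]_4 :=
  mk 4 (fun i j => if i == j then 1 else if (i == 0%N) && (j == 2%N) then 1 else 0).
Definition Y0 (F : finFieldType) : 'M[F]_4 :=
  mk 4 (fun i j => if i == j then 1 else
        if ((i == 1%N) && (j == 3%N)) || ((i == 0%N) && (j == 2%N)) then 1 else 0).

Lemma x0_UR (F : finFieldType) : x0 F \in UR F I0.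
Proof.
rewrite inE; apply/andP; split.
  apply: UT_intro => [i j|i]; last by rewrite mk_entry eqxx.
  by rewrite mk_entry; move: i j; do 2 case=> [[|[|[|[|?]]]] ?] //.
apply/forallP => i; apply/forallP => j; apply/implyP; rewrite !mxE.
by move: i j; do 2 case=> [[|[|[|[|?]]]] ?] //=; rewrite ?subrr ?eqxx // !inE.
Qed.

Lemma mxn_u1 (F : finFieldType) : mxn (u1 F) 0 0 = 1.
Proof. by rewrite /mxn; case: insubP => [i _ _|] //=; rewrite ord1 mxE. Qed.

Lemma y0E (F : finFieldType) : embL I0 (v3 F) (u1 F) *m x0 F = Y0 F.
Proof.
apply/matrixP => p q; rewrite !mxE !big_ord_recr !big_ord0 /=.
move: p q; do 2 case=> [[|[|[|[|?]]]] ?] //.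
all: rewrite !mxE /= !inE /= ?rkE ?big_ord_recr ?big_ord0 /= ?inE /= ?mxn_mk /=.
all: by rewrite ?addn0 ?mxn_u1 ?mul0r ?mulr0 ?mul1r ?mulr1 ?addr0 ?add0r.
Qed.

Lemma chi4_Y0 (F : finFieldType) : chi4 (Y0 F) = 1.
Proof.
have H1 : Y0 F \in UTpi F (Pset r1).
  apply/UTpi_supp; split.
    apply: UT_intro => [i j|i]; last by rewrite mk_entry eqxx.
    by rewrite mk_entry; move: i j; do 2 case=> [[|[|[|[|?]]]] ?] //.
  move=> i j; rewrite !mxE.
  by move: i j; do 2 case=> [[|[|[|[|?]]]] ?] //=; rewrite ?subrr ?eqxx.
have H2 : Y0 F \notin UTpi F (Pset r2).
  apply: (@notin_UTpi _ _ _ _ (@Ordinal 4 0 isT) (@Ordinal 4 2 isT)) => //.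
  by rewrite !mxE /= subr0 oner_neq0.
by rewrite /chi4 /chiH H1 (negbTE H2) subr0.
Qed.

Lemma chi4_ge0 (F : finFieldType) (y : 'M[F]_4) : 0 <= chi4 y.
Proof.
rewrite /chi4 /chiH; case: (boolP (y \in UTpi F (Pset r2))) => H2.
  have -> : y \in UTpi F (Pset r1).
    move/UTpi_supp: H2 => [Hy S]; apply/UTpi_supp; split => // i j /S.
    by rewrite /r1 /r2 => ->.
  by rewrite subrr.
by rewrite subr0 ler0n.
Qed.

Lemma Delta_pos (F : finFieldType) : Delta (@chi4 F) (v3 F) (u1 F) != 0.
Proof.
have term_ge0 : forall I : {set 'I_4},
    0 <= (#|UR F I|%:R)^-1 * \sum_(x in UR F I) chi4 (embL I (v3 F) (u1 F) *m x).
  by move=> I; apply: mulr_ge0; [rewrite invr_ge0 ler0n | apply: sumr_ge0 => x _; apply: chi4_ge0].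
have pos : 0 < (#|UR F I0|%:R)^-1 * \sum_(x in UR F I0) chi4 (embL I0 (v3 F) (u1 F) *m x).
  apply: mulr_gt0.
    rewrite invr_gt0 ltr0n; apply/card_gt0P; exists (x0 F); exact: x0_UR.
  rewrite (bigD1 (x0 F)) ?x0_UR //= y0E chi4_Y0.
  apply: (lt_le_trans ltr01); rewrite lerDl; apply: sumr_ge0 => x _; apply: chi4_ge0.
rewrite /Delta (bigD1 I0) /=; last by rewrite cardsC1 card_ord.
apply: lt0r_neq0; apply: (lt_le_trans pos); rewrite lerDl.
by apply: sumr_ge0 => I _; apply: term_ge0.
Qed.

Unset Implicit Arguments.

Theorem theorem7p7 (F : finFieldType) :
  (* cf(UT_.) is noncommutative *)
  (exists (n a b : nat) (f : 'M[F]_a -> algC) (g : 'M[F]_b -> algC) (A : 'M[F]_n),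
      (a + b)%N = n /\ is_cf f /\ is_cf g /\ mu f g A <> mu g f A) /\
  (* cf(UT_.) is noncocommutative *)
  (exists (n a b : nat) (chi : 'M[F]_n -> algC) (u : 'M[F]_a) (v : 'M[F]_b),
      (a + b)%N = n /\ is_cf chi /\ Delta chi u v <> Delta chi v u) /\
  (* scf(UT_.) is noncommutative *)
  (exists (n a b : nat) (f : 'M[F]_a -> algC) (g : 'M[F]_b -> algC) (A : 'M[F]_n),
      (a + b)%N = n /\ is_scf f /\ is_scf g /\ mu f g A <> mu g f A) /\
  (* scf(UT_.) is noncocommutative *)
  (exists (n a b : nat) (chi : 'M[F]_n -> algC) (u : 'M[F]_a) (v : 'M[F]_b),
      (a + b)%N = n /\ is_scf chi /\ Delta chi u v <> Delta chi v u).
Proof.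
have Hd : Delta (@chi4 F) (u1 F) (v3 F) <> Delta (@chi4 F) (v3 F) (u1 F).
  by rewrite Delta_zero => /esym/eqP; apply/negP; apply: Delta_pos.
split; [|split; [|split]].
- exists 3%N, 1%N, 2%N, (fun A : 'M[F]_1 => chiH (@r0 1) A),
    (fun A : 'M[F]_2 => chiH (@r0 2) A), (A3 F).
  split => //; split; first exact: (cf_chiH F (@ideal_r0 1)).
  split; first exact: (cf_chiH F (@ideal_r0 2)).
  exact: prod_ex.
- exists 4%N, 1%N, 3%N, (@chi4 F), (u1 F), (v3 F); split => //; split => //.
  exact: (cf_sub (cf_chiH F ideal_r1) (cf_chiH F ideal_r2)).
- exists 3%N, 1%N, 2%N, (fun A : 'M[F]_1 => chiH (@r0 1) A),
    (fun A : 'M[F]_2 => chiH (@r0 2) A), (A3 F).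
  split => //; split; first exact: (scf_chiH F (@ideal_r0 1)).
  split; first exact: (scf_chiH F (@ideal_r0 2)).
  exact: prod_ex.
- exists 4%N, 1%N, 3%N, (@chi4 F), (u1 F), (v3 F); split => //; split => //.
  exact: (scf_sub (scf_chiH F ideal_r1) (scf_chiH F ideal_r2)).
Qed.
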